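(* Let $\mathbb{D}$ be $[0,1]^2$ or a mesh and let $A,B:\mathbb{D}\to\mathbb{R}$ satisfy (Q1) $A\le B$ and (Q2) $L^{(A,B)}(R)\ge0$ for all $R\in\mathfrak{R}$. If $$\min\{P_O^{(A,B)}(\mathbf{x}),\,B(\mathbf{x})-A(\mathbf{x})\}=0\quad\text{for all }\mathbf{x}\in\mathbb{D},$$ then $V_A(R)\ge0$ for every rectangle $R$ with corners in $\mathbb{D}$.
   Context: A rectangle is $[s_1,s_2]\times[t_1,t_2]$ with $s_1<s_2$, $t_1<t_2$ and corners in $\mathbb{D}$; main corners: southwest and northeast; opposite corners: southeast and northwest; $V_A(R)=A(s_1,t_1)+A(s_2,t_2)-A(s_2,t_1)-A(s_1,t_2)$. $\mathfrak{R}$ is the set of finite formal unions $R=R_1\sqcup\dots\sqcup R_n$ of rectangles (repetitions allowed), with multiplicity $m_R(\mathbf{y})=\sum_i m_{R_i}(\mathbf{y})$, where $m_{R_i}(\mathbf{y})$ is $1$ at main corners, $-1$ at opposite corners, $0$ elsewhere. $L^{(A,B)}(R)=\sum_{m_R(\mathbf{y})>0}B(\mathbf{y})m_R(\mathbf{y})+\sum_{m_R(\mathbf{y})<0}A(\mathbf{y})m_R(\mathbf{y})$; $P_O^{(A,B)}(\mathbf{x})=\inf\{L^{(A,B)}(R)/(-m_R(\mathbf{x})):R\in\mathfrak{R},m_R(\mathbf{x})<0\}$ with $\inf\emptyset=+\infty$. *)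

(* Defs.v *)
From Stdlib Require Import Reals Lra List ClassicalEpsilon.
Import ListNotations.
Open Scope R_scope.

Definition pt := (R * R)%type.

Definition unit_square (p : pt) : Prop :=
  0 <= fst p <= 1 /\ 0 <= snd p <= 1.

Definition grid_axis (I : list R) : Prop :=
  In 0 I /\ In 1 I /\ (forall s, In s I -> 0 <= s <= 1).

Definition is_mesh (D : pt -> Prop) : Prop :=
  exists I J : list R, grid_axis I /\ grid_axis J /\
    (forall p, D p <-> (In (fst p) I /\ In (snd p) J)).

Definition is_domain (D : pt -> Prop) : Prop :=
  (forall p, D p <-> unit_square p) \/ is_mesh D.

Record rect := Rect { s1 : R; s2 : R; t1 : R; t2 : R }.

Definition valid_rect (D : pt -> Prop) (r : rect) : Prop :=
  s1 r < s2 r /\ t1 r < t2 r /\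
  D (s1 r, t1 r) /\ D (s2 r, t2 r) /\ D (s2 r, t1 r) /\ D (s1 r, t2 r).

Definition V (A : pt -> R) (r : rect) : R :=
  A (s1 r, t1 r) + A (s2 r, t2 r) - A (s2 r, t1 r) - A (s1 r, t2 r).

Definition pt_eq_dec (x y : pt) : {x = y} + {x <> y}.
Proof.
  destruct x as [a b], y as [c d].
  destruct (Req_EM_T a c) as [H1|H1]; destruct (Req_EM_T b d) as [H2|H2];
    [left; subst; reflexivity | right; congruence | right; congruence | right; congruence].
Defined.

Definition ind (y z : pt) : R := if pt_eq_dec y z then 1 else 0.

Definition mult1 (r : rect) (y : pt) : R :=
  ind y (s1 r, t1 r) + ind y (s2 r, t2 r) - ind y (s2 r, t1 r) - ind y (s1 r, t2 r).

(* a formal union R_1 ⊔ ... ⊔ R_n is a list of rectangles (repetitions allowed) *)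
Definition union_valid (D : pt -> Prop) (Rs : list rect) : Prop :=
  forall r, In r Rs -> valid_rect D r.

Definition mult (Rs : list rect) (y : pt) : R :=
  fold_right (fun r acc => mult1 r y + acc) 0 Rs.

Definition corners (r : rect) : list pt :=
  [(s1 r, t1 r); (s2 r, t2 r); (s2 r, t1 r); (s1 r, t2 r)].

Definition support (Rs : list rect) : list pt :=
  nodup pt_eq_dec (flat_map corners Rs).

Definition Lterm (A B : pt -> R) (Rs : list rect) (y : pt) : R :=
  let m := mult Rs y in
  if Rlt_dec 0 m then B y * m else if Rlt_dec m 0 then A y * m else 0.

Definition L (A B : pt -> R) (Rs : list rect) : R :=
  fold_right (fun y acc => Lterm A B Rs y + acc) 0 (support Rs).

Inductive ER := Fin (r : R) | PInf | MInf.

Definition ER_le (e f : ER) : Prop :=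
  match e, f with
  | MInf, _ => True
  | _, PInf => True
  | Fin a, Fin b => a <= b
  | _, _ => False
  end.

Definition ER_min (e f : ER) : ER :=
  match e, f with
  | MInf, _ | _, MInf => MInf
  | PInf, g | g, PInf => g
  | Fin a, Fin b => Fin (Rmin a b)
  end.

(* e is the infimum (in the extended reals) of S; inf of empty set = +oo *)
Definition is_ext_inf (S : R -> Prop) (e : ER) : Prop :=
  (forall s, S s -> ER_le e (Fin s)) /\
  (forall f, (forall s, S s -> ER_le f (Fin s)) -> ER_le f e).

Definition ext_inf (S : R -> Prop) : ER :=
  epsilon (inhabits PInf) (fun e => is_ext_inf S e).

Definition PO_set (D : pt -> Prop) (A B : pt -> R) (x : pt) (v : R) : Prop :=
  exists Rs : list rect, union_valid D Rs /\ mult Rs x < 0 /\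
    v = L A B Rs / (- mult Rs x).

Definition P_O (D : pt -> Prop) (A B : pt -> R) (x : pt) : ER :=
  ext_inf (PO_set D A B x).

(* Main.v *)
Require Import Defs.
From Stdlib Require Import Reals List.
From Stdlib Require Import Lra Lia ZArith Classical ClassicalEpsilon FunctionalExtensionality.
Import ListNotations.
Open Scope R_scope.

Definition sumL (l : list pt) (f : pt -> R) : R :=
  fold_right (fun y acc => f y + acc) 0 l.

Definition phi (a b m : R) : R :=
  if Rlt_dec 0 m then b * m else if Rlt_dec m 0 then a * m else 0.

Lemma Lterm_phi A B Rs y : Lterm A B Rs y = phi (A y) (B y) (mult Rs y).
Proof. reflexivity. Qed.

Lemma L_sum A B Rs : L A B Rs = sumL (support Rs) (Lterm A B Rs).
Proof. reflexivity. Qed.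

Lemma phi0 a b : phi a b 0 = 0.
Proof. unfold phi; destruct (Rlt_dec 0 0); [lra|]; destruct (Rlt_dec 0 0); lra. Qed.

Lemma phi_max a b m : a <= b -> phi a b m = Rmax (a*m) (b*m).
Proof.
  intro H; unfold phi, Rmax.
  destruct (Rle_dec (a*m) (b*m)) as [G|G];
  destruct (Rlt_dec 0 m); destruct (Rlt_dec m 0); try lra;
  first [ (assert (m = 0) as -> by lra; ring) | nra | (exfalso; nra) ].
Qed.

Lemma phi_conv a b n k m1 m2 : a <= b -> 0 <= n -> 0 <= k ->
  phi a b (n*m1 + k*m2) <= n * phi a b m1 + k * phi a b m2.
Proof.
  intros H Hn Hk. rewrite !phi_max by exact H.
  pose proof (Rmax_l (a*m1) (b*m1)). pose proof (Rmax_r (a*m1) (b*m1)).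
  pose proof (Rmax_l (a*m2) (b*m2)). pose proof (Rmax_r (a*m2) (b*m2)).
  apply Rmax_lub; nra.
Qed.

Lemma phi_mono_b a b b' m : b' <= b -> phi a b' m <= phi a b m.
Proof. intro H; unfold phi; destruct (Rlt_dec 0 m); [nra|]; destruct (Rlt_dec m 0); lra. Qed.

Lemma phi_nz a b m : phi a b m <> 0 -> m <> 0.
Proof. intros H E; subst; apply H; apply phi0. Qed.

Lemma sumL_app l1 l2 f : sumL (l1 ++ l2) f = sumL l1 f + sumL l2 f.
Proof. induction l1; simpl; [lra|]. unfold sumL in *; simpl; rewrite IHl1; lra. Qed.

Lemma sumL_le l f g : (forall y, f y <= g y) -> sumL l f <= sumL l g.
Proof. intro H; induction l; simpl; [lra|]. specialize (H a); unfold sumL in *; simpl; lra. Qed.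

Lemma sumL_ext l f g : (forall y, f y = g y) -> sumL l f = sumL l g.
Proof. intro H; induction l; simpl; [lra|]. specialize (H a); unfold sumL in *; simpl; lra. Qed.

Lemma sumL_lin l f g n k : sumL l (fun y => n * f y + k * g y) = n * sumL l f + k * sumL l g.
Proof. induction l; simpl; [ring|]. unfold sumL in *; simpl; rewrite IHl; ring. Qed.

Lemma sumL_eq l1 : forall l2 f, NoDup l1 -> NoDup l2 ->
  (forall y, f y <> 0 -> (In y l1 <-> In y l2)) -> sumL l1 f = sumL l2 f.
Proof.
  induction l1 as [|a l1 IH]; intros l2 f N1 N2 H.
  - simpl. clear N1. revert N2 H. induction l2 as [|b l2 IH2]; intros N2 H; simpl; [lra|].
    destruct (Req_EM_T (f b) 0) as [E|E].
    + rewrite E. change (0 = 0 + sumL l2 f). rewrite <- IH2. lra.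
      inversion N2; auto. intros y Hy; split; [intros []|]. intro Hin.
      apply (H y Hy). right; auto.
    + exfalso. apply (proj2 (H b E)). left; auto.
  - inversion N1; subst.
    destruct (Req_EM_T (f a) 0) as [E|E].
    + change (f a + sumL l1 f = sumL l2 f). rewrite E, (IH l2 f); auto; [lra|].
      intros y Hy. assert (y <> a) by (intro; subst; auto).
      rewrite <- (H y Hy). simpl; split; [auto|]. intros [G|G]; [congruence|auto].
    + assert (Ha : In a l2) by (apply (H a E); left; auto).
      destruct (in_split a l2 Ha) as [l2a [l2b Heq]]. subst l2.
      rewrite sumL_app. change (f a + sumL l1 f = sumL l2a f + (f a + sumL l2b f)).
      assert (sumL l1 f = sumL (l2a ++ l2b) f) as ->.
      { apply IH; auto. eapply NoDup_remove_1; eauto.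
        pose proof (NoDup_remove_2 _ _ _ N2) as Nr.
        intros y Hy. split.
        - intro Hin. assert (y <> a) by (intro; subst; auto).
          assert (In y (l2a ++ a :: l2b)) by (apply (H y Hy); right; auto).
          apply in_app_iff in H1. apply in_app_iff. simpl in H1. intuition congruence.
        - intro Hin. assert (y <> a) by (intro; subst; auto).
          assert (In y (a :: l1)). { apply (H y Hy). apply in_app_iff in Hin. apply in_app_iff. simpl; tauto. }
          destruct H1; [congruence|auto]. }
      rewrite sumL_app; lra.
Qed.

Lemma mult_app l1 l2 y : mult (l1 ++ l2) y = mult l1 y + mult l2 y.
Proof. induction l1; simpl; [lra|]. rewrite IHl1; lra. Qed.

Fixpoint rep (n : nat) (Rs : list rect) : list rect :=
  match n with O => [] | S n' => Rs ++ rep n' Rs end.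

Lemma mult_rep n Rs y : mult (rep n Rs) y = INR n * mult Rs y.
Proof. induction n; simpl rep. simpl; lra. rewrite mult_app, IHn, S_INR; lra. Qed.

Lemma union_valid_app D l1 l2 : union_valid D l1 -> union_valid D l2 -> union_valid D (l1 ++ l2).
Proof. intros H1 H2 r Hr; apply in_app_iff in Hr; destruct Hr; auto. Qed.

Lemma union_valid_rep D n Rs : union_valid D Rs -> union_valid D (rep n Rs).
Proof. intro H; induction n; simpl. intros r []. apply union_valid_app; auto. Qed.

Lemma mult1_nz r y : mult1 r y <> 0 -> In y (corners r).
Proof.
  intro H. destruct (in_dec pt_eq_dec y (corners r)) as [I|I]; auto.
  exfalso; apply H. simpl in I. unfold mult1, Defs.ind.
  repeat match goal with |- context[pt_eq_dec ?a ?b] => destruct (pt_eq_dec a b) end;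
  try (exfalso; apply I; subst; simpl; auto 6; fail); lra.
Qed.

Lemma mult_nz Rs y : mult Rs y <> 0 -> In y (flat_map corners Rs).
Proof.
  induction Rs; intro H; [simpl in H; lra|].
  change (In y (corners a ++ flat_map corners Rs)). change (mult1 a y + mult Rs y <> 0) in H.
  apply in_app_iff.
  destruct (Req_EM_T (mult1 a y) 0) as [E|E].
  - right; apply IHRs; lra.
  - left; apply mult1_nz; auto.
Qed.

Lemma mult_nz_D D Rs y : union_valid D Rs -> mult Rs y <> 0 -> D y.
Proof.
  intros HV H. apply mult_nz in H. apply in_flat_map in H as [r [Hr Hy]].
  destruct (HV r Hr) as (_&_&H1&H2&H3&H4). simpl in Hy.
  destruct Hy as [<-|[<-|[<-|[<-|[]]]]]; auto.
Qed.

Lemma ind_Z (y p : pt) : exists z, Defs.ind y p = IZR z.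
Proof. unfold Defs.ind; destruct pt_eq_dec; [exists 1%Z|exists 0%Z]; reflexivity. Qed.

Lemma mult_Z Rs y : exists z, mult Rs y = IZR z.
Proof.
  induction Rs; simpl. exists 0%Z; reflexivity.
  destruct IHRs as [z Hz]. unfold mult1.
  destruct (ind_Z y (s1 a, t1 a)) as [a1 ->].
  destruct (ind_Z y (s2 a, t2 a)) as [a2 ->].
  destruct (ind_Z y (s2 a, t1 a)) as [a3 ->].
  destruct (ind_Z y (s1 a, t2 a)) as [a4 ->].
  exists (a1 + a2 - a3 - a4 + z)%Z. rewrite Hz, plus_IZR, !minus_IZR, !plus_IZR. ring.
Qed.

Lemma pos_nat (x : R) z : x = IZR z -> 0 < x -> exists n : nat, x = INR n.
Proof.
  intros -> H. apply lt_0_IZR in H. exists (Z.to_nat z).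
  rewrite INR_IZR_INZ, Z2Nat.id; auto; lia.
Qed.

Lemma L_as_sum A B Rs U : NoDup U -> (forall y, mult Rs y <> 0 -> In y U) ->
  L A B Rs = sumL U (Lterm A B Rs).
Proof.
  intros N H. rewrite L_sum. apply sumL_eq; auto. apply NoDup_nodup.
  intros y Hy. rewrite Lterm_phi in Hy. apply phi_nz in Hy.
  split; intros _; auto. apply nodup_In, mult_nz; auto.
Qed.

Lemma L_mono A B B' Rs : (forall y, B' y <= B y) -> L A B' Rs <= L A B Rs.
Proof.
  intro H; rewrite !L_sum; apply sumL_le; intro y; rewrite !Lterm_phi; apply phi_mono_b; auto.
Qed.

Definition upd (B : pt -> R) (y0 : pt) (v : R) : pt -> R :=
  fun y => if pt_eq_dec y y0 then v else B y.

Definition Happ D A B y0 : Prop := forall eps, 0 < eps -> exists Rs',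
  union_valid D Rs' /\ mult Rs' y0 < 0 /\ L A B Rs' <= eps * - mult Rs' y0.

Lemma step D A B y0 (QA : forall x, D x -> A x <= B x)
  (Q2 : forall Rs, union_valid D Rs -> 0 <= L A B Rs) (H : Happ D A B y0) :
  forall Rs, union_valid D Rs -> 0 <= L A (upd B y0 (A y0)) Rs.
Proof.
  intros Rs HRs. set (B' := upd B y0 (A y0)).
  destruct (Rle_lt_dec (mult Rs y0) 0) as [Hk|Hk].
  - assert (L A B' Rs = L A B Rs) as ->; [|auto].
    rewrite !L_sum. apply sumL_ext. intro y. rewrite !Lterm_phi. unfold B', upd.
    destruct (pt_eq_dec y y0); [subst|auto]. unfold phi.
    destruct (Rlt_dec 0 (mult Rs y0)); [lra|auto].
  - set (k := mult Rs y0) in *. set (L' := L A B' Rs).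
    assert (Heps : forall eps, 0 < eps -> -(k*eps) <= L').
    { intros eps He. destruct (H eps He) as [Rs' [HV [Hm HL]]].
      set (n := - mult Rs' y0) in *.
      destruct (mult_Z Rs y0) as [zk Hzk]. destruct (mult_Z Rs' y0) as [zn Hzn].
      destruct (pos_nat k zk) as [kk Hkk]; auto.
      destruct (pos_nat n (- zn)%Z) as [nn Hnn]. unfold n; rewrite Hzn, opp_IZR; auto. unfold n; lra.
      set (S := rep nn Rs ++ rep kk Rs').
      assert (HS : union_valid D S) by (apply union_valid_app; apply union_valid_rep; auto).
      assert (HmS : forall y, mult S y = n * mult Rs y + k * mult Rs' y).
      { intro y; unfold S; rewrite mult_app, !mult_rep, <- Hkk, <- Hnn; ring. }
      set (U := support (Rs ++ Rs')).
      assert (NU : NoDup U) by apply NoDup_nodup.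
      assert (InU : forall y, mult Rs y <> 0 \/ mult Rs' y <> 0 -> In y U).
      { intros y Hy. apply nodup_In. unfold support. rewrite flat_map_app. apply in_app_iff.
        destruct Hy; [left|right]; apply mult_nz; auto. }
      assert (E1 : L A B S = sumL U (Lterm A B S)).
      { apply L_as_sum; auto. intros y Hy. apply InU. rewrite HmS in Hy.
        destruct (Req_EM_T (mult Rs y) 0); [right|left]; auto. intro E; apply Hy; rewrite E, e; ring. }
      assert (E2 : L' = sumL U (Lterm A B' Rs)) by (apply L_as_sum; auto).
      assert (E3 : L A B Rs' = sumL U (Lterm A B Rs')) by (apply L_as_sum; auto).
      assert (Hpw : forall y, Lterm A B S y <= n * Lterm A B' Rs y + k * Lterm A B Rs' y).
      { intro y. rewrite !Lterm_phi, HmS. unfold B', upd.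
        destruct (pt_eq_dec y y0) as [->|Ny].
        - fold k. replace (n * k + k * mult Rs' y0) with 0 by (unfold n; ring).
          rewrite phi0. unfold phi.
          destruct (Rlt_dec 0 k); [|lra]. destruct (Rlt_dec 0 (mult Rs' y0)); [lra|].
          destruct (Rlt_dec (mult Rs' y0) 0); [|lra]. unfold n; nra.
        - destruct (Req_EM_T (mult Rs y) 0) as [Z1|Z1];
          [destruct (Req_EM_T (mult Rs' y) 0) as [Z2|Z2]|].
          + rewrite Z1, Z2, !Rmult_0_r, Rplus_0_r, !phi0. lra.
          + apply phi_conv; [apply QA; apply (mult_nz_D D Rs' y); auto|unfold n; lra|lra].
          + apply phi_conv; [apply QA; apply (mult_nz_D D Rs y); auto|unfold n; lra|lra]. }
      pose proof (Q2 S HS) as Q. rewrite E1 in Q.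
      pose proof (sumL_le U _ _ Hpw) as P. rewrite sumL_lin, <- E2, <- E3 in P.
      assert (0 < n) by (unfold n; lra).
      assert (k * L A B Rs' <= k * (eps * n)) by (apply Rmult_le_compat_l; lra).
      assert (0 <= n * (L' + k * eps)) by nra.
      assert (0 <= L' + k * eps).
      { destruct (Rle_lt_dec 0 (L' + k*eps)); auto. nra. }
      lra. }
    destruct (Rle_lt_dec 0 L') as [G|G]; auto.
    exfalso. assert (Hp : 0 < - L' / (2 * k)).
    { apply Rdiv_lt_0_compat; lra. }
    specialize (Heps _ Hp).
    replace (k * (- L' / (2 * k))) with (- L' / 2) in Heps by (field; lra). lra.
Qed.

Lemma step' D A B y0 (QA : forall x, D x -> A x <= B x)
  (Q2 : forall Rs, union_valid D Rs -> 0 <= L A B Rs) (H : B y0 = A y0 \/ Happ D A B y0) :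
  forall Rs, union_valid D Rs -> 0 <= L A (upd B y0 (A y0)) Rs.
Proof.
  destruct H as [E|H]; [|apply step; auto].
  assert (upd B y0 (A y0) = B) as ->; auto.
  apply functional_extensionality; intro y; unfold upd; destruct pt_eq_dec; subst; auto.
Qed.

Lemma ext_inf_exists S : exists e, is_ext_inf S e.
Proof.
  destruct (classic (exists s, S s)) as [[s0 Hs0]|NE].
  - destruct (classic (exists lb, forall s, S s -> lb <= s)) as [[lb Hlb]|NB].
    + destruct (completeness (fun x => S (- x))) as [m [Hm1 Hm2]].
      { exists (- lb). intros x Hx. specialize (Hlb _ Hx). lra. }
      { exists (- s0). rewrite Ropp_involutive; auto. }
      exists (Fin (- m)). split.
      * intros s Hs. simpl. assert (- s <= m) by (apply Hm1; rewrite Ropp_involutive; auto). lra.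
      * intros f Hf. destruct f as [a| |]; simpl; auto.
        -- assert (m <= - a). { apply Hm2. intros x Hx. specialize (Hf _ Hx). simpl in Hf. lra. } lra.
        -- exact (Hf s0 Hs0).
    + exists MInf. split; [intros; simpl; auto|].
      intros f Hf. destruct f as [a| |]; simpl; auto.
      * apply NB. exists a. intros s Hs. exact (Hf s Hs).
      * exact (Hf s0 Hs0).
  - exists PInf. split.
    + intros s Hs; exfalso; apply NE; eauto.
    + intros f _; destruct f; simpl; auto.
Qed.

Lemma PO_zero D A B x : P_O D A B x = Fin 0 -> Happ D A B x.
Proof.
  intros HP eps He.
  assert (Hi : is_ext_inf (PO_set D A B x) (Fin 0)).
  { rewrite <- HP. unfold P_O, ext_inf. apply epsilon_spec. apply ext_inf_exists. }
  destruct (classic (exists s, PO_set D A B x s /\ s < eps)) as [[s [[Rs [HV [Hm Hs]]] Hlt]]|N].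
  - exists Rs. split; [auto|split; auto].
    assert (L A B Rs = s * - mult Rs x) as -> by (rewrite Hs; field; lra).
    apply Rmult_le_compat_r; lra.
  - exfalso. destruct Hi as [_ Hi].
    assert (ER_le (Fin eps) (Fin 0)).
    { apply Hi. intros s Hs. simpl. apply Rnot_lt_le. intro; apply N; eauto. }
    simpl in H; lra.
Qed.

Lemma min_case e b : ER_min e (Fin b) = Fin 0 -> b = 0 \/ e = Fin 0.
Proof.
  destruct e as [a| |]; simpl; intro H; try discriminate.
  - injection H; intro E. unfold Rmin in E; destruct Rle_dec; subst; auto.
  - injection H; auto.
Qed.

Ltac neqpt := let E := fresh in intro E; inversion E; lra.

Lemma upd_eq B y v : upd B y v y = v.
Proof. unfold upd; destruct (pt_eq_dec y y); congruence. Qed.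
Lemma upd_neq B y y0 v : y <> y0 -> upd B y0 v y = B y.
Proof. intro H; unfold upd; destruct (pt_eq_dec y y0); congruence. Qed.

Lemma sumL4 a b c d f : sumL [a;b;c;d] f = f a + f b + f c + f d.
Proof. unfold sumL; simpl; ring. Qed.
Lemma mult_single r y : mult [r] y = mult1 r y.
Proof. simpl; ring. Qed.
Lemma phi1 a b : phi a b 1 = b.
Proof. unfold phi; destruct (Rlt_dec 0 1); [ring|lra]. Qed.
Lemma phim1 a b : phi a b (-1) = - a.
Proof. unfold phi; destruct (Rlt_dec 0 (-1)); [lra|]; destruct (Rlt_dec (-1) 0); [ring|lra]. Qed.

Lemma mult1_corners r : s1 r < s2 r -> t1 r < t2 r ->
  mult1 r (s1 r, t1 r) = 1 /\ mult1 r (s2 r, t2 r) = 1 /\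
  mult1 r (s2 r, t1 r) = -1 /\ mult1 r (s1 r, t2 r) = -1.
Proof.
  intros Hs Ht. unfold mult1, Defs.ind. repeat split;
  repeat match goal with |- context[pt_eq_dec ?a ?b] => let E := fresh "E" in destruct (pt_eq_dec a b) as [E|E];
    [try (inversion E; lra)|try (exfalso; apply E; reflexivity)] end; lra.
Qed.

Theorem mainTheorem13 (D : pt -> Prop) (HD : is_domain D) (A B : pt -> R)
  (Q1 : forall x, D x -> A x <= B x)
  (Q2 : forall Rs : list rect, union_valid D Rs -> 0 <= L A B Rs)
  (Hmin : forall x, D x -> ER_min (P_O D A B x) (Fin (B x - A x)) = Fin 0) :
  forall r : rect, valid_rect D r -> 0 <= V A r.
Proof.
  intros r Hr. pose proof Hr as (Hs & Ht & D1 & D2 & D3 & D4).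
  assert (Cy : forall y, D y -> B y = A y \/ Happ D A B y).
  { intros y Dy. destruct (min_case _ _ (Hmin y Dy)) as [E|E]; [left; lra|right; apply PO_zero; auto]. }
  pose (y1 := (s1 r, t1 r)). pose (y2 := (s2 r, t2 r)).
  pose (B1 := upd B y1 (A y1)).
  assert (QA1 : forall x, D x -> A x <= B1 x).
  { intros x Dx; unfold B1, upd; destruct pt_eq_dec; [subst; lra|auto]. }
  assert (Q21 := step' D A B y1 Q1 Q2 (Cy y1 D1)). fold B1 in Q21.
  assert (N12 : y2 <> y1) by (unfold y1, y2; neqpt).
  assert (C2 : B1 y2 = A y2 \/ Happ D A B1 y2).
  { unfold B1. destruct (Cy y2 D2) as [E|H].
    - left. rewrite upd_neq; auto.
    - right. intros eps He. destruct (H eps He) as [Rs [HV [Hm HL]]]. exists Rs; split; auto; split; auto.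
      eapply Rle_trans; [|exact HL]. apply L_mono. intro y. unfold upd. destruct pt_eq_dec; subst; [apply Q1; auto|lra]. }
  assert (Q22 := step' D A B1 y2 QA1 Q21 C2).
  assert (Vr : union_valid D [r]) by (intros r' [<-|[]]; auto).
  specialize (Q22 [r] Vr).
  assert (NC : NoDup (corners r)).
  { unfold corners.
    repeat (apply NoDup_cons; [simpl; let H := fresh in intro H; repeat (destruct H as [H|H]; [inversion H; lra|]); exact H|]).
    apply NoDup_nil. }
  rewrite (L_as_sum A (upd B1 y2 (A y2)) [r] (corners r) NC) in Q22.
  2:{ intros y Hy. apply mult_nz in Hy. simpl in Hy. unfold corners. simpl. tauto. }
  unfold corners in Q22. rewrite sumL4, !Lterm_phi, !mult_single in Q22.
  destruct (mult1_corners r Hs Ht) as (M1 & M2 & M3 & M4).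
  rewrite M1, M2, M3, M4, !phi1, !phim1 in Q22.
  fold y1 y2 in Q22. rewrite upd_eq, upd_neq in Q22 by (intro E; apply N12; congruence).
  unfold B1 in Q22. rewrite upd_eq in Q22.
  unfold V. fold y1 y2. lra.
Qed.
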